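(* Let $n\geq 6$ be an integer. Then for every real $x\in[3,n/2]$, $$n\frac{\sin(\pi x/n)}{\sin(\pi/n)}\geq x(n-x)+1.$$ *)

(* Defs.v *)
From Stdlib Require Import Reals Lra Lia.

(* Main.v *)
Require Import Defs.
From Stdlib Require Import Reals Lra.
Open Scope R_scope.

Lemma PI_ub : PI <= 3.15.
Proof.
destruct (PI_2_3_7_ineq 1) as [_ H].
unfold tg_alt, PI_2_3_7_tg, Ratan_seq in H. simpl in H. lra.
Qed.

Theorem lemma5p1 (n : nat) (Hn : (6 <= n)%nat) (x : R)
  (Hx1 : 3 <= x) (Hx2 : x <= INR n / 2) :
  INR n * (sin (PI * x / INR n) / sin (PI / INR n)) >= x * (INR n - x) + 1.
Proof.
  assert (HN : 6 <= INR n) by (replace 6 with (INR 6) by (simpl; lra); apply le_INR; exact Hn).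
  set (N := INR n) in *.
  pose proof PI_ub as Hpu. pose proof PI_RGT_0 as Hpl.
  pose proof (PI2_Rlt_PI).
  set (t := PI / N). set (th := PI * x / N).
  assert (Ht0 : 0 < t) by (unfold t; apply Rdiv_lt_0_compat; lra).
  assert (HtP : t < PI).
  { unfold t. apply (Rmult_lt_reg_r N); [lra|]. unfold Rdiv. rewrite Rmult_assoc, Rinv_l by lra. nra. }
  assert (Hst : 0 < sin t) by (apply sin_gt_0; lra).
  assert (Hst2 : sin t < t) by (apply sin_lt_x; lra).
  assert (Hth0 : 0 < th) by (unfold th; apply Rdiv_lt_0_compat; nra).
  assert (HthP : th <= PI / 2).
  { unfold th. apply (Rmult_le_reg_r N); [lra|]. unfold Rdiv. rewrite Rmult_assoc, Rinv_l by lra. nra. }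
  assert (Hsth : 0 <= sin th) by (apply sin_ge_0; lra).
  assert (Hlb : th - th*th*th/6 <= sin th).
  { destruct (sin_bound th 0) as [H1 _]; try lra.
    unfold sin_approx, sin_term in H1. simpl in H1. lra. }
  assert (Hstep : N * (sin th / t) <= N * (sin th / sin t)).
  { apply Rmult_le_compat_l; [lra|]. unfold Rdiv. apply Rmult_le_compat_l; [lra|].
    apply Rinv_le_contravar; lra. }
  assert (Heq : N * ((th - th*th*th/6) / t) = N * x - PI*PI*x*x*x/(6*N)).
  { unfold th, t. field. split; lra. }
  assert (Hstep2 : N * ((th - th*th*th/6) / t) <= N * (sin th / t)).
  { apply Rmult_le_compat_l; [lra|]. unfold Rdiv. apply Rmult_le_compat_r; [|lra].
    left; apply Rinv_0_lt_compat; lra. }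
  assert (Hfin : x * (N - x) + 1 <= N * x - PI*PI*x*x*x/(6*N)).
  { assert (PI*PI*x*x*x/(6*N) <= x*x - 1); [|lra].
    apply (Rmult_le_reg_r (6*N)); [lra|].
    unfold Rdiv. rewrite Rmult_assoc, Rinv_l by lra.
    assert (PI*PI <= 9.93) by nra.
    assert (x*x >= 9) by nra.
    assert (PI*PI*x*x*x <= 9.93*(x*x)*x) by (apply Rmult_le_compat_r; nra).
    nra. }
  apply Rle_ge. lra.
Qed.
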